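(* Let $\Phi$ be an irreducible crystallographic root system with simple system $S$ and positive system $\Phi^+$, let $k$ be a positive integer, and let $\mathcal{I}=(I_1,\ldots,I_k)$ be a geometric chain of $k$ ideals in the root poset of $\Phi$, with $\underline{\mathcal{I}}=(\underline{I}_1,\ldots,\underline{I}_{k+1})$ defined by $\underline{I}_i=I_i$ for $i\le k$ and $\underline{I}_{k+1}=\bigcup_{i+j=k+1}((I_i+I_j)\cap\Phi^+)\cup I_k\cup S$. Let $\mathsf{supp}(\mathcal{I})=I_k\cap S$. If $\alpha\in\Phi^+$ is a nonnegative integer linear combination of elements of $\mathsf{supp}(\mathcal{I})$, then $r_\alpha(\underline{\mathcal{I}})=r_\alpha(\mathcal{I})$. In particular, if $\alpha\in\Phi^+$ satisfies $r_\alpha(\underline{\mathcal{I}})\le k$, then $r_\alpha(\underline{\mathcal{I}})=r_\alpha(\mathcal{I})$.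
   Context: The root poset is $\Phi^+$ with $\alpha\le\beta$ iff $\beta-\alpha$ is a nonnegative integer combination of $S$; ideals are down-closed subsets. Sumsets: $A+B=\{a+b\mid a\in A,b\in B\}$. An ascending chain $I_1\subseteq\cdots\subseteq I_K$ of ideals, with $J_i=\Phi^+\setminus I_i$, is geometric if $(I_i+I_j)\cap\Phi^+\subseteq I_{i+j}$ for all $i,j\in\{0,\ldots,K\}$ with $i+j\le K$, and $(J_i+J_j)\cap\Phi^+\subseteq J_{i+j}$ for all $i,j\in\{0,\ldots,K\}$, where $I_0=\varnothing$, $J_0=\Phi^+$, $J_i=J_K$ for $i>K$. (In the definition of $\underline{I}_{k+1}$, $i,j\in\{0,\ldots,k\}$.) For a chain $\mathcal{I}=(I_1,\ldots,I_K)$ and $\alpha\in\Phi^+$, $r_\alpha(\mathcal{I})=\min\{r_1+\cdots+r_m\mid\alpha=\alpha_1+\cdots+\alpha_m,\ \alpha_i\in I_{r_i},\ r_i\in\{1,\ldots,K\}\}$, with $r_\alpha(\mathcal{I})=\infty$ if no such decomposition exists. *)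

(* Defs.v *)
From HB Require Import structures.
From mathcomp Require Import all_boot all_order all_algebra.
From mathcomp Require Import boolp reals.
Set Implicit Arguments. Unset Strict Implicit. Unset Printing Implicit Defensive.
Import Order.TTheory GRing.Theory Num.Theory.
Local Open Scope ring_scope.

Definition dotv (R : realType) (n : nat) (u v : 'rV[R]_n) : R := (u *m v^T) 0 0.

Definition root_system (R : realType) (n : nat) (Phi : seq 'rV[R]_n) : Prop :=
  (forall v : 'rV[R]_n, exists c : 'rV[R]_n -> R, v = \sum_(a <- Phi) c a *: a) /\
  (0 \notin Phi) /\
  (forall a b, a \in Phi -> b \in Phi ->
     b - ((2 * dotv b a / dotv a a) *: a) \in Phi) /\
  (forall a b, a \in Phi -> b \in Phi ->
     exists z : int, 2 * dotv b a / dotv a a = z%:~R) /\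
  (forall a (c : R), a \in Phi -> c *: a \in Phi -> c = 1 \/ c = -1).

Definition irreducible (R : realType) (n : nat) (Phi : seq 'rV[R]_n) : Prop :=
  Phi != [::] /\
  forall P : 'rV[R]_n -> Prop,
    (forall a b, a \in Phi -> b \in Phi -> P a -> ~ P b -> dotv a b = 0) ->
    (forall a, a \in Phi -> P a) \/ (forall a, a \in Phi -> ~ P a).

Definition simple_system (R : realType) (n : nat) (Phi S : seq 'rV[R]_n) : Prop :=
  uniq S /\ {subset S <= Phi} /\
  (forall c : 'rV[R]_n -> R, \sum_(s <- S) c s *: s = 0 ->
     forall s, s \in S -> c s = 0) /\
  (forall b, b \in Phi -> exists c : 'rV[R]_n -> int,
     b = \sum_(s <- S) (c s)%:~R *: s /\
     ((forall s, s \in S -> (0 <= c s)%R) \/ (forall s, s \in S -> (c s <= 0)%R))).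

Definition nncomb (R : realType) (n : nat) (S : seq 'rV[R]_n) (v : 'rV[R]_n) : Prop :=
  exists c : 'rV[R]_n -> nat, v = \sum_(s <- S) (c s)%:R *: s.

Definition pos_root (R : realType) (n : nat) (Phi S : seq 'rV[R]_n) (a : 'rV[R]_n) : Prop :=
  a \in Phi /\ nncomb S a.

Definition root_le (R : realType) (n : nat) (S : seq 'rV[R]_n) (a b : 'rV[R]_n) : Prop :=
  nncomb S (b - a).

Definition is_ideal (R : realType) (n : nat) (Phi S : seq 'rV[R]_n)
    (I : 'rV[R]_n -> Prop) : Prop :=
  (forall a, I a -> pos_root Phi S a) /\
  (forall a b, pos_root Phi S a -> pos_root Phi S b -> root_le S a b -> I b -> I a).

(* A chain (I_1, ..., I_K) is encoded as I : nat -> set of vectors, of which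
   only the indices 1..K matter.  Convention I_0 = empty: *)
Definition Iext (R : realType) (n : nat) (I : nat -> 'rV[R]_n -> Prop)
    (i : nat) (a : 'rV[R]_n) : Prop :=
  i <> 0%N /\ I i a.

(* J_i = Phi^+ \ I_i, with J_0 = Phi^+ and J_i = J_K for i > K *)
Definition Jc (R : realType) (n : nat) (Phi S : seq 'rV[R]_n)
    (I : nat -> 'rV[R]_n -> Prop) (K i : nat) (a : 'rV[R]_n) : Prop :=
  pos_root Phi S a /\ ~ Iext I (minn i K) a.

Definition geometric_chain (R : realType) (n : nat) (Phi S : seq 'rV[R]_n)
    (I : nat -> 'rV[R]_n -> Prop) (K : nat) : Prop :=
  (forall i, (1 <= i <= K)%N -> is_ideal Phi S (I i)) /\
  (forall i, (1 <= i < K)%N -> forall a, I i a -> I i.+1 a) /\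
  (forall i j a b, (i + j <= K)%N -> Iext I i a -> Iext I j b ->
     pos_root Phi S (a + b) -> Iext I (i + j) (a + b)) /\
  (forall i j a b, (i <= K)%N -> (j <= K)%N -> Jc Phi S I K i a -> Jc Phi S I K j b ->
     pos_root Phi S (a + b) -> Jc Phi S I K (i + j) (a + b)).

Definition Iunder (R : realType) (n : nat) (Phi S : seq 'rV[R]_n)
    (I : nat -> 'rV[R]_n -> Prop) (k i : nat) (a : 'rV[R]_n) : Prop :=
  if (i <= k)%N then I i a
  else if i == k.+1 then
    (exists i0 j0 b c, [/\ (1 <= i0 <= k)%N, (1 <= j0 <= k)%N, (i0 + j0 = k.+1)%N,
        I i0 b /\ I j0 c & a = b + c /\ pos_root Phi S a])
    \/ I k a \/ a \in S
  else False.

Definition rdec (R : realType) (n : nat) (I : nat -> 'rV[R]_n -> Prop) (K : nat)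
    (a : 'rV[R]_n) (m0 : nat) : Prop :=
  exists d : seq ('rV[R]_n * nat),
    [/\ a = \sum_(p <- d) p.1,
        (forall p, p \in d -> (1 <= p.2 <= K)%N /\ I p.2 p.1)
      & (\sum_(p <- d) p.2)%N = m0].

(* r_a(I): Some (minimum) or None (= infinity) *)
Definition rval (R : realType) (n : nat) (I : nat -> 'rV[R]_n -> Prop) (K : nat)
    (a : 'rV[R]_n) : option nat :=
  match pselect (exists m0, rdec I K a m0) with
  | left H =>
      Some (@ex_minn (fun m0 => `[< rdec I K a m0 >])
              (let: ex_intro m0 Hm := H in
               ex_intro (fun m1 => `[< rdec I K a m1 >]) m0 (asboolT Hm)))
  | right _ => None
  end.

(* Main.v *)
Require Import Defs.
From HB Require Import structures.
From mathcomp Require Import all_boot all_order all_algebra.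
From mathcomp Require Import boolp reals.
Import Order.TTheory GRing.Theory Num.Theory.
Local Open Scope ring_scope.
Set Implicit Arguments. Unset Strict Implicit.

Lemma rval_some (R : realType) (n : nat) (X : nat -> 'rV[R]_n -> Prop) K a :
  (exists m, rdec X K a m) ->
  exists m, [/\ rval X K a = Some m, rdec X K a m &
     forall m', rdec X K a m' -> (m <= m')%N].
Proof.
move=> Hex; rewrite /rval; case: pselect => [H|H]; last by case: (H Hex).
case: ex_minnP => m /asboolP Hm Hmin; exists m; split => // m' Hm'.
by apply: Hmin; apply/asboolP.
Qed.

Lemma rval_none (R : realType) (n : nat) (X : nat -> 'rV[R]_n -> Prop) K a :
  ~ (exists m, rdec X K a m) -> rval X K a = None.
Proof. by move=> Hn; rewrite /rval; case: pselect => [H|//]; case: (Hn H). Qed.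

Lemma rval_eq (R : realType) (n : nat) (X Y : nat -> 'rV[R]_n -> Prop) K1 K2 a :
  (forall m, rdec X K1 a m -> exists2 m', rdec Y K2 a m' & (m' <= m)%N) ->
  (forall m, rdec Y K2 a m -> exists2 m', rdec X K1 a m' & (m' <= m)%N) ->
  rval X K1 a = rval Y K2 a.
Proof.
move=> HXY HYX.
case: (pselect (exists m, rdec X K1 a m)) => [[m Hm]|HN].
  have [mX [-> HmX HminX]] := rval_some (ex_intro _ m Hm).
  have [m1 Hm1 _] := HXY _ HmX.
  have [mY [-> HmY HminY]] := rval_some (ex_intro _ m1 Hm1).
  have [m2 Hm2 le2] := HYX _ HmY.
  have [m3 Hm3 le3] := HXY _ HmX.
  have h1 := HminX _ Hm2. have h2 := HminY _ Hm3.
  by congr Some; apply/eqP; rewrite eqn_leq (leq_trans h1 le2) (leq_trans h2 le3).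
rewrite (rval_none HN) rval_none // => [[m Hm]].
by have [m' Hm' _] := HYX _ Hm; apply: HN; exists m'.
Qed.

Lemma nncomb0 (R : realType) (n : nat) (S : seq 'rV[R]_n) : nncomb S 0.
Proof.
exists (fun _ => 0%N); rewrite big1 // => s _; by rewrite mulr0n scale0r.
Qed.

Lemma nncombD (R : realType) (n : nat) (S : seq 'rV[R]_n) x y :
  nncomb S x -> nncomb S y -> nncomb S (x + y).
Proof.
move=> [c1 ->] [c2 ->]; exists (fun s => c1 s + c2 s)%N.
rewrite -big_split /=; apply: eq_bigr => s _; by rewrite natrD scalerDl.
Qed.

Lemma nncomb_sum (R : realType) (n : nat) (S : seq 'rV[R]_n) (d : seq ('rV[R]_n * nat)) :
  (forall p, p \in d -> nncomb S p.1) -> nncomb S (\sum_(p <- d) p.1).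
Proof.
elim: d => [|p d IH] H; first by rewrite big_nil; apply: nncomb0.
rewrite big_cons; apply: nncombD; first by apply: H; rewrite mem_head.
by apply: IH => q Hq; apply: H; rewrite in_cons Hq orbT.
Qed.

Lemma ind_sum (R : realType) (n : nat) (S : seq 'rV[R]_n) s :
  uniq S -> s \in S -> \sum_(t <- S) (nat_of_bool (t == s))%:R *: t = s.
Proof.
move=> uS sS; rewrite (bigD1_seq s) //= eqxx mulr1n scale1r big1 ?addr0 //.
by move=> t /negbTE ->; rewrite mulr0n scale0r.
Qed.

Lemma simple_coef (R : realType) (n : nat) (S : seq 'rV[R]_n) s c e :
  uniq S ->
  (forall c : 'rV[R]_n -> R, \sum_(s <- S) c s *: s = 0 ->
     forall s, s \in S -> c s = 0) ->
  s \in S ->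
  \sum_(t <- S) (c t)%:R *: t = s + \sum_(t <- S) (e t)%:R *: t -> c s <> 0%N.
Proof.
move=> uS ind sS Heq Hcs.
pose f := fun t : 'rV[R]_n => (c t)%:R - (e t)%:R - (nat_of_bool (t == s))%:R : R.
have H0 : \sum_(t <- S) f t *: t = 0.
  rewrite /f; under eq_bigr do rewrite !scalerBl.
  rewrite !sumrB ind_sum // Heq.
  by rewrite addrK subrr.
have := ind f H0 s sS; rewrite /f eqxx Hcs /= mulr1n sub0r -opprD => /eqP.
by rewrite oppr_eq0 natr1 pnatr_eq0.
Qed.

Unset Implicit Arguments.
Theorem lemma10 (R : realType) (n : nat) (Phi S : seq 'rV[R]_n) (k : nat)
    (I : nat -> 'rV[R]_n -> Prop) :
  root_system Phi -> irreducible Phi -> simple_system Phi S ->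
  (0 < k)%N -> geometric_chain Phi S I k ->
  (forall a, pos_root Phi S a ->
     (exists c : 'rV[R]_n -> nat, a = \sum_(s <- S) (c s)%:R *: s /\
        (forall s, s \in S -> c s <> 0%N -> I k s)) ->
     rval (Iunder Phi S I k) k.+1 a = rval I k a) /\
  (forall a, pos_root Phi S a ->
     (exists m, rval (Iunder Phi S I k) k.+1 a = Some m /\ (m <= k)%N) ->
     rval (Iunder Phi S I k) k.+1 a = rval I k a).
Proof.
move=> _ _ [uS [SPhi [ind _]]] k0 [Hid [_ _]].
have IU : forall i x, (1 <= i <= k)%N -> Iunder Phi S I k i x = I i x.
  by move=> i x /andP [_ ik]; rewrite /Iunder ik.
have ItoU : forall a m, rdec I k a m -> rdec (Iunder Phi S I k) k.+1 a m.
  move=> a m [d [Ha Hd Hm]]; exists d; split => // p Hp.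
  have [/andP [h1 h2] HI] := Hd p Hp.
  by rewrite IU ?h1 ?h2 // (leq_trans h2).
have partnn : forall p : 'rV[R]_n * nat, (1 <= p.2 <= k.+1)%N ->
    Iunder Phi S I k p.2 p.1 -> nncomb S p.1.
  move=> [x i] /= /andP [i1 ik]; rewrite /Iunder.
  case: ifP => ile.
    by move=> HI; have [H _] := Hid i (introT andP (conj i1 ile)) ; case: (H x HI).
  case: ifP => _ //.
  case=> [[i0 [j0 [b [c [_ _ _ _ [_ [_ Hp]]]]]]] | [Hk | HS]] //.
    have [H _] := Hid k (introT andP (conj k0 (leqnn k))); by case: (H x Hk).
  exists (fun t => nat_of_bool (t == x)); by rewrite ind_sum.
split.
  move=> a _ [c [Hac Hc]]; apply: rval_eq.
    move=> m [d [Ha Hd Hm]].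
    have HS : forall p, p \in d -> p.1 \in S -> I k p.1.
      move=> p Hp pS; apply: Hc => //.
      have [e He] : nncomb S (\sum_(q <- rem p d) q.1).
        apply: nncomb_sum => q /mem_rem Hq.
        by have [h1 h2] := Hd q Hq; apply: partnn.
      apply: (simple_coef (e := e) uS ind pS).
      by rewrite -Hac -He Ha (perm_big _ (perm_to_rem Hp)) big_cons.
    have conv : forall d0, {subset d0 <= d} ->
      exists d', [/\ \sum_(p <- d') p.1 = \sum_(p <- d0) p.1,
        (forall p, p \in d' -> (1 <= p.2 <= k)%N /\ I p.2 p.1)
        & (\sum_(p <- d') p.2 <= \sum_(p <- d0) p.2)%N].
      elim=> [|p d0 IH] Hsub; first by exists [::].
      have [d' [E1 V1 C1]] := IH (fun q Hq => Hsub q (mem_behead (s := p :: d0) Hq)).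
      have pd : p \in d by apply: Hsub; rewrite mem_head.
      have [l [El Vl Cl]] : exists l, [/\ \sum_(q <- l) q.1 = p.1,
          (forall q, q \in l -> (1 <= q.2 <= k)%N /\ I q.2 q.1)
          & (\sum_(q <- l) q.2 <= p.2)%N].
        have [/andP [i1 ik] HU] := Hd p pd.
        have HSp := HS p pd.
        move: i1 ik HU HSp; case Ep: p => [x i] /= i1 ik.
        rewrite /Iunder; case: ifP => ile.
          move=> HI _; exists [:: (x, i)]; split.
          - by rewrite big_seq1.
          - by move=> q; rewrite mem_seq1 => /eqP -> /=; rewrite i1 ile.
          - by rewrite big_seq1.
        case: ifP => /eqP ei // H HSx.
        case: H => [[i0 [j0 [b [c0 [/andP [a1 a2] /andP [b1 b2] e0 [Hb Hc0] [xe _]]]]]] | H].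
          exists [:: (b, i0); (c0, j0)]; split.
          - by rewrite !big_cons big_nil addr0 xe.
          - move=> q; rewrite !in_cons in_nil orbF => /orP [] /eqP -> /=.
              by rewrite a1 a2.
            by rewrite b1 b2.
          - by rewrite !big_cons big_nil addn0 e0 ei.
        have Hk : I k x by case: H => // /HSx.
        exists [:: (x, k)]; split.
        - by rewrite big_seq1.
        - by move=> q; rewrite mem_seq1 => /eqP -> /=; rewrite k0 leqnn.
        - by rewrite big_seq1 ei.
      exists (l ++ d'); split.
      - by rewrite big_cat big_cons El E1.
      - by move=> q; rewrite mem_cat => /orP [/Vl | /V1].
      - by rewrite big_cat big_cons /= leq_add.
    have [d' [E1 V1 C1]] := conv d (fun q h => h).
    exists (\sum_(p <- d') p.2)%N; last by rewrite -Hm.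
    by exists d'; split => //; rewrite E1.
  move=> m Hm; exists m => //; exact: ItoU.
move=> a _ [m [Hr mk]].
have Hex : exists m0, rdec (Iunder Phi S I k) k.+1 a m0.
  case: (pselect (exists m0, rdec (Iunder Phi S I k) k.+1 a m0)) => // HN.
  by rewrite rval_none in Hr.
have [m1 [Hr1 Hd1 Hmin1]] := rval_some Hex.
move: Hr; rewrite Hr1 => -[em]; subst m1.
have [d [Ha Hd Hsum]] := Hd1.
have HdI : rdec I k a m.
  exists d; split => // p Hp.
  have pm : (p.2 <= m)%N.
    by rewrite -Hsum (perm_big _ (perm_to_rem Hp)) big_cons leq_addr.
  have [/andP [h1 h2] HU] := Hd p Hp.
  have pk : (p.2 <= k)%N := leq_trans pm mk.
  by rewrite h1 pk; rewrite IU ?h1 ?pk in HU.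
have [mI [HrI HdI' HminI]] := rval_some (ex_intro _ m HdI).
rewrite HrI; congr Some; apply/eqP; rewrite eqn_leq (HminI _ HdI) andbT.
by apply: Hmin1; apply: ItoU.
Qed.
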